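(* The superconnecting filter $\mathcal{F}_\infty$ of the Kirch space satisfies $$\mathcal{F}_\infty=\{B\subseteq\mathbb{N}:\exists q\in\mathbb{N}\text{ odd and square-free with }q\mathbb{N}\subseteq B\}.$$
   Context: $\mathbb{N}=\{1,2,\dots\}$, $\mathbb{N}_0=\{0\}\cup\mathbb{N}$, $q\mathbb{N}=\{qn:n\in\mathbb{N}\}$. The Kirch topology $\tau_K$ on $\mathbb{N}$ is generated by the base of all $a+b\mathbb{N}_0=\{a+bn:n\in\mathbb{N}_0\}$ with $a,b\in\mathbb{N}$ coprime and $b$ square-free (not divisible by the square of a prime). Closures are in $\tau_K$. The superconnecting filter is $\mathcal{F}_\infty=\{B\subseteq\mathbb{N}:\exists n\in\mathbb{N}\ \exists U_1,\dots,U_n\in\tau_K\setminus\{\emptyset\}\ (\overline{U_1}\cap\dots\cap\overline{U_n}\subseteq B)\}$. *)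

(* Defs.v *)
From mathcomp Require Import all_boot.
Set Implicit Arguments. Unset Strict Implicit. Unset Printing Implicit Defensive.

(* The ambient set N = {1,2,...} is represented as the positive elements of
   nat; subsets of N are predicates P : nat -> Prop with P x -> 0 < x. *)
Definition subN (P : nat -> Prop) : Prop := forall x, P x -> 0 < x.

Definition squarefree (b : nat) : Prop :=
  forall p, prime p -> ~ (p * p %| b).

Definition arith (a b : nat) : nat -> Prop := fun x => exists n, x = a + b * n.

Definition kirch_base (a b : nat) : Prop :=
  [/\ 0 < a, 0 < b, coprime a b & squarefree b].

Definition kirch_open (U : nat -> Prop) : Prop :=
  subN U /\
  forall x, U x -> exists a b, [/\ kirch_base a b, arith a b x &
                                  forall y, arith a b y -> U y].

Definition kirch_closure (U : nat -> Prop) : nat -> Prop :=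
  fun x => 0 < x /\
    forall V, kirch_open V -> V x -> exists y, V y /\ U y.

Definition F_infty (B : nat -> Prop) : Prop :=
  subN B /\
  exists (n : nat) (U : 'I_n -> (nat -> Prop)),
    0 < n /\
    (forall i, kirch_open (U i) /\ exists x, U i x) /\
    (forall x, (forall i, kirch_closure (U i) x) -> B x).

Definition multN (q : nat) : nat -> Prop := fun x => exists n, 0 < n /\ x = q * n.

(* Main.v *)
Require Import Defs.
From mathcomp Require Import all_boot zify.

Lemma sqf_prime p : prime p -> squarefree p.
Proof.
move=> pp r pr /= H.
have rp : r %| p by apply: dvdn_trans H; apply: dvdn_mulr.
rewrite dvdn_prime2 // in rp; move/eqP: rp => ->{r pr} in H.
have := dvdn_leq (prime_gt0 pp) H. have := prime_gt1 pp. nia.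
Qed.

Lemma sqf1 : squarefree 1.
Proof. move=> r pr; rewrite dvdn1 => /eqP H. have := prime_gt1 pr. nia. Qed.

Lemma base_open a b : kirch_base a b -> kirch_open (arith a b).
Proof.
move=> kb; case: (kb) => a0 _ _ _; split.
  by move=> x [n ->]; lia.
by move=> x ax; exists a, b; split.
Qed.

Lemma arith_coprime c d n : coprime c d -> coprime (c + d * n) d.
Proof. by move=> h; rewrite -coprime_modl addnC (mulnC d n) modnMDl coprime_modl. Qed.

Lemma sqf_dvd q x : 0 < q -> squarefree q ->
  (forall p, prime p -> p %| q -> p %| x) -> q %| x.
Proof.
move=> q0 sq H; apply/dvdn_partP => // p; rewrite mem_primes => /and3P[pp _ pq].
rewrite p_part.
have hl : logn p q <= 1.
  rewrite leqNgt; apply/negP => h.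
  apply: (sq p pp); apply: dvdn_trans (pfactor_dvdnn p q).
  by rewrite mulnn dvdn_exp2l.
have hg : 0 < logn p q by rewrite logn_gt0 mem_primes pp q0 pq.
have -> : logn p q = 1 by lia.
by rewrite expn1; apply: H.
Qed.

Lemma notdvd_prod N (Q : pred 'I_N) r : prime r ->
  (forall j : 'I_N, Q j -> prime j /\ (j : nat) <> r) ->
  ~~ (r %| \prod_(j < N | Q j) j).
Proof.
move=> pr H; rewrite Euclid_dvd_prod //.
apply: (big_ind (fun b => ~~ b)) => //.
  by move=> [] [].
move=> j /H [pj ne]; rewrite dvdn_prime2 //; apply/eqP => e; by apply: ne.
Qed.

Definition qM M := \prod_(j < M.+1 | prime j && odd j) (j : nat).

Lemma qM_gt0 M : 0 < qM M.
Proof. by apply: prodn_cond_gt0 => j /andP[/prime_gt0 ->]. Qed.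

Lemma qM_odd M : odd (qM M).
Proof.
apply: (big_ind odd) => //; first by move=> a b ha hb; rewrite oddM ha hb.
by move=> j /andP[].
Qed.

Lemma qM_dvd M p : prime p -> odd p -> p <= M -> p %| qM M.
Proof.
move=> pp op pM; have lt : p < M.+1 by [].
by rewrite /qM (bigD1 (Ordinal lt)) /= ?pp ?op //= dvdn_mulr.
Qed.

Lemma qM_sqf M : squarefree (qM M).
Proof.
move=> r pr H.
case: (boolP ((r < M.+1) && odd r)) => [/andP[lt or]|nin].
  move: H; rewrite /qM (bigD1 (Ordinal lt)) /= ?pr ?or //.
  rewrite dvdn_pmul2l ?prime_gt0 //; apply/negP; apply: notdvd_prod => //.
  move=> j /andP[/andP[pj _] ne]; split => // e; move/eqP: ne; apply.
  by apply: val_inj.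
have: r %| qM M by apply: dvdn_trans H; apply: dvdn_mulr.
apply/negP; apply: notdvd_prod => // j /andP[pj oj]; split => // e.
by move/negP: nin; apply; rewrite -e ltn_ord oj.
Qed.

Lemma cl_mono (U V : nat -> Prop) : (forall y, U y -> V y) ->
  forall x, kirch_closure U x -> kirch_closure V x.
Proof.
move=> UV x [x0 H]; split => // W oW Wx.
by have [y [Wy Uy]] := H W oW Wx; exists y; split => //; apply: UV.
Qed.

Lemma sqf_dvdn d g : squarefree d -> g %| d -> squarefree g.
Proof. by move=> sd gd r pr h; apply: (sd r pr); apply: dvdn_trans gd. Qed.

Lemma key a b q x : kirch_base a b -> 0 < q ->
  (forall p, prime p -> odd p -> p %| b -> p %| q) -> multN q x ->
  kirch_closure (arith a b) x.
Proof.
move=> [a0 b0 cab sb] q0 Hq [m [m0 ->]].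
split; first by rewrite muln_gt0 q0.
move=> V [_ oV] Vx.
have [c [d [[c0 d0 ccd sd] [n0 ex] cdV]]] := oV _ Vx.
set z := q * m in ex *.
have cxd : coprime z d by rewrite ex; apply: arith_coprime.
set g := gcdn d b.
have g0 : 0 < g by rewrite gcdn_gt0 d0.
have g2 : g %| 2.
  apply: sqf_dvd => //; first by move=> r pr h; apply: (sd r pr); apply: dvdn_trans h (dvdn_gcdl _ _).
  move=> p pp pg.
  have pd : p %| d by apply: dvdn_trans pg (dvdn_gcdl _ _).
  have pb : p %| b by apply: dvdn_trans pg (dvdn_gcdr _ _).
  case: (boolP (odd p)) => op.
    have px : p %| z by apply: dvdn_mulr; apply: Hq.
    have : p %| gcdn z d by rewrite dvdn_gcd px pd.
    move: cxd; rewrite /coprime => /eqP ->; rewrite dvdn1 => /eqP p1.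
    by move: pp; rewrite p1.
  have : 2 %| p by rewrite dvdn2.
  by rewrite dvdn_prime2 // => /eqP <-.
set w := a + b * z - z.
have xbx : z <= b * z by rewrite leq_pmull.
have gw : g %| w.
  have gle : g <= 2 by apply: dvdn_leq.
  have : g = 1 \/ g = 2 by lia.
  case=> [->|g1]; first by rewrite dvd1n.
  have gd : 2 %| d by rewrite -g1 dvdn_gcdl.
  have gb : 2 %| b by rewrite -g1 dvdn_gcdr.
  have oa : odd a by rewrite -coprimen2; apply: coprime_dvdr gb cab.
  have oz : odd z by rewrite -coprimen2; apply: coprime_dvdr gd cxd.
  rewrite g1 /w -(subnDr 1) -addnA (addnC _ 1) addnA.
  apply: dvdn_sub; last by rewrite addn1 dvdn2 /= oz.
  apply: dvdn_add; first by rewrite addn1 dvdn2 /= oa.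
  by apply: dvdn_mulr.
case: (@egcdnP d b d0) => km kn E _.
rewrite -/g in E.
set w' := w %/ g.
have ew : w' * g = w by rewrite divnK.
have e1 : d * (km * w') = kn * b * w' + w.
  by rewrite -ew mulnA (mulnC d km) E mulnDl (mulnC g w').
exists (z + d * (km * w')); split.
  apply: cdV; exists (n0 + km * w'); by rewrite ex mulnDr addnA.
exists (kn * w' + z).
rewrite e1 /w mulnDr (mulnC kn b) -mulnA.
move: xbx; set u := b * z; set v := b * (kn * w'). lia.
Qed.

Lemma cl_prime a p x : prime p -> kirch_closure (arith a p) x -> ~~ (p %| x) ->
  x %% p = a %% p.
Proof.
move=> pp [x0 H] npx.
have ob : kirch_base x p.
  split => //; first exact: prime_gt0.
    by rewrite coprime_sym prime_coprime.
  exact: sqf_prime.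
have [y [[t ->] [s e]]] := H _ (base_open x p ob) (ex_intro _ 0 (esym (etrans (congr1 (addn x) (muln0 p)) (addn0 x)))).
have ex1 : (x + p * t) %% p = x %% p by rewrite addnC mulnC modnMDl.
by rewrite -ex1 e addnC mulnC modnMDl.
Qed.

Lemma odd_dvd p q : odd q -> p %| q -> odd p.
Proof. by move=> oq /dvdnP[k e]; move: oq; rewrite e oddM => /andP[]. Qed.

Definition Ub q (i : nat) : nat -> Prop :=
  if prime i./2 && (i./2 %| q) then arith (1 + odd i) i./2 else arith 1 1.

Lemma Ub_base q i : odd q -> kirch_base (if prime i./2 && (i./2 %| q) then 1 + odd i else 1)
   (if prime i./2 && (i./2 %| q) then i./2 else 1).
Proof.
move=> oq; case: ifP => [/andP[pp pq]|_].
  split; first by case: odd.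
  - exact: prime_gt0.
  - by case: odd; rewrite ?coprime2n ?coprime1n //; apply: odd_dvd oq pq.
  exact: sqf_prime.
by split => //; exact: sqf1.
Qed.

Lemma Ub_open q i : odd q -> kirch_open (Ub q i) /\ exists x, Ub q i x.
Proof.
move=> oq; have := base_open _ _ (Ub_base q i oq); rewrite /Ub.
case: ifP => _ h; split => //.
  by exists (1 + odd i), 0; rewrite muln0 addn0.
by exists 1, 0.
Qed.

Lemma half2 p : (p.*2)./2 = p /\ (p.*2.+1)./2 = p /\ odd (p.*2) = false /\ odd (p.*2.+1).
Proof. by rewrite /= doubleK uphalf_double odd_double. Qed.

Theorem lemma3p7 (B : nat -> Prop) :
  F_infty B <->
  (subN B /\
   exists q, [/\ 0 < q, odd q, squarefree q & forall x, multN q x -> B x]).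
Proof.
split.
  move=> [sB [n [U [n0 [HU HB]]]]]; split => //.
  have : forall i, exists ab : nat * nat,
      kirch_base ab.1 ab.2 /\ (forall y, arith ab.1 ab.2 y -> U i y).
    move=> i; have [[_ oU] [x Ux]] := HU i; have [a [b [kb _ sub]]] := oU x Ux.
    by exists (a, b).
  case/fin_all_exists => f Hf.
  set M := \max_(i : 'I_n) (f i).2.
  exists (qM M); split; [exact: qM_gt0 | exact: qM_odd | exact: qM_sqf | ].
  move=> x mx; apply: HB => i.
  have [kb sub] := Hf i.
  refine (cl_mono _ _ sub _ _).
  refine (key _ _ _ _ kb (qM_gt0 M) _ mx).
  move=> p pp op pb; apply: qM_dvd => //.
  apply: leq_trans (dvdn_leq _ pb) _; first by case: kb.
  rewrite /M; exact: leq_bigmax.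
move=> [sB [q [q0 oq sq Hq]]]; split => //.
exists (q.+1).*2, (fun i => Ub q i); split => //; split.
  by move=> i; apply: Ub_open.
move=> x Hx; apply: Hq.
have lt0 : 0 < (q.+1).*2 by [].
have x0 : 0 < x by case: (Hx (Ordinal lt0)).
have qx : q %| x.
  apply: sqf_dvd => // p pp pq.
  have ple : p <= q by apply: dvdn_leq.
  have l1 : p.*2 < (q.+1).*2 by rewrite -!muln2; lia.
  have l2 : p.*2.+1 < (q.+1).*2 by rewrite -!muln2; lia.
  have c1 := Hx (Ordinal l1); have c2 := Hx (Ordinal l2).
  rewrite /Ub /= in c1 c2.
  have [h1 [h2 [h3 h4]]] := half2 p.
  rewrite h1 h3 uphalf_double pp pq /= in c1 c2.
  case: (boolP (p %| x)) => // npx.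
  have e1 := cl_prime _ _ _ pp c1 npx; have e2 := cl_prime _ _ _ pp c2 npx.
  have p2 : p != 2 by apply/eqP => e; move: (odd_dvd _ _ oq pq); rewrite e.
  have p1 := prime_gt1 pp.
  have m1 : (1 + 0) %% p = 1 by rewrite modn_small //; lia.
  have m2 : (1 + 1) %% p = 2 by rewrite modn_small //; lia.
  move: e1 e2; rewrite m1 m2 => -> //.
exists (x %/ q); split; first by rewrite divn_gt0 // dvdn_leq.
by rewrite mulnC divnK.
Qed.
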